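(* For every positive integer $n$, the matrix $L$ indexed by $P(n)$ defined in the context is invertible.
   Context: Let $\phi$ denote Euler's totient function. For a positive integer $n$ let $P(n)=\{(i,j): j\mid n,\ i\mid j\}$. Let $L$ be the square matrix with rows and columns indexed by $P(n)$ whose entry in row $(i,j)$ and column $(d,c)$ is $L_{(i,j)}^{(d,c)} = \phi(d)\,\frac{n}{\operatorname{lcm}(j,c)}$ if $d\mid i$ and $j\mid \operatorname{lcm}(i,c)$, and $0$ otherwise. *)

(* Defs.v *)
From HB Require Import structures.
From mathcomp Require Import all_boot all_order all_algebra.
Set Implicit Arguments. Unset Strict Implicit. Unset Printing Implicit Defensive.
Import GRing.Theory.
Local Open Scope ring_scope.

(* P(n) = {(i,j) : j | n, i | j}, as a finite subtype of pairs of naturals <= n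
   (for n > 0 every divisor of n is in [1, n]). *)
Definition Pidx (n : nat) :=
  { p : 'I_n.+1 * 'I_n.+1 | ((p.2 : nat) %| n)%N && ((p.1 : nat) %| p.2)%N }.

Definition Lentry (n i j d c : nat) : nat :=
  if (d %| i)%N && (j %| lcmn i c)%N then (totient d * (n %/ lcmn j c))%N else 0%N.

Definition Lmat (n : nat) : 'M[rat]_#|{: Pidx n}| :=
  \matrix_(a, b)
    let r := val (enum_val a : Pidx n) in
    let s := val (enum_val b : Pidx n) in
    (Lentry n r.1 r.2 s.1 s.2)%:R.

(* Main.v *)
Require Import Defs.
From mathcomp Require Import all_boot all_order all_algebra.
From mathcomp Require Import zify fingroup perm.
Set Implicit Arguments. Unset Strict Implicit. Unset Printing Implicit Defensive.
Import GRing.Theory Num.Theory.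
Local Open Scope ring_scope.

Lemma det_key (R : idomainType) (m : nat) (M : 'M[R]_m) (key : 'I_m -> nat) :
  injective key -> (forall a b, a != b -> M a b != 0 -> (key b < key a)%N) ->
  \det M = \prod_a M a a.
Proof.
move=> kinj Hk; rewrite /determinant (bigD1 (1%g : {perm 'I_m})) //=.
rewrite [X in _ + X]big1 ?addr0.
  by rewrite odd_perm1 expr0 mul1r; apply: eq_bigr => i _; rewrite perm1.
move=> s /eqP sn1; apply/eqP; rewrite mulf_eq0; apply/orP; right.
apply/negPn/negP; rewrite prodf_seq_neq0 => /allP Hall0.
have Hall : forall x, M x (s x) != 0 by move=> x; have := Hall0 x; rewrite mem_index_enum => /(_ isT).
have Hle : forall i, (key (s i) <= key i)%N.
  move=> i; case: (eqVneq i (s i)) => [<-//|ne].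
  exact: ltnW (Hk _ _ ne (Hall i)).
have [i ne] : exists i, s i != i.
  apply/existsP; rewrite -negb_forall; apply/negP => /forallP H; apply: sn1.
  by apply/permP => i; rewrite perm1; apply/eqP.
have lt : (key (s i) < key i)%N.
  by apply: Hk; [rewrite eq_sym | apply: Hall].
have : (\sum_j key (s j) < \sum_j key j)%N.
  rewrite (bigD1 i) //= [X in (_ < X)%N](bigD1 i) //=.
  by rewrite -addSn leq_add // leq_sum.
by rewrite -(reindex_inj (@perm_inj _ s) (P := xpredT) (F := key)) ltnn.
Qed.

Theorem proposition3p3 (n : nat) : (0 < n)%N -> Lmat n \in unitmx.
Proof.
move=> n0.
pose r (a : 'I_#|{: Pidx n}|) := val (enum_val a : Pidx n).
pose key a := ((r a).1 * n.+1 + (n - (r a).2))%N.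
have rP a : ((r a).2 %| n)%N && ((r a).1 %| (r a).2)%N := valP (enum_val a).
have kinj : injective key.
  move=> a b; rewrite /key => E.
  have Hb1 := ltn_ord (r a).2; have Hb2 := ltn_ord (r b).2.
  have E1 : (r a).1 = (r b).1 :> nat.
    have := congr1 (divn^~ n.+1) E.
    by rewrite !divnMDl // !divn_small ?addn0 //; lia.
  have E2 : (r a).2 = (r b).2 :> nat by move: E; rewrite E1; lia.
  apply: enum_val_inj; apply: val_inj; rewrite -/(r a) -/(r b).
  by case: (r a) (r b) E1 E2 => [x y] [z w] /= /val_inj -> /val_inj ->.
rewrite unitmxE unitfE (det_key kinj).
  rewrite prodf_seq_neq0; apply/allP => a _; rewrite mxE /Lentry.
  have /andP[jn ij] := rP a; rewrite -/(r a) dvdnn.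
  rewrite (_ : lcmn _ _ = (r a).2) ?dvdnn /=; last first.
    by apply/eqP; rewrite eqn_dvd dvdn_lcm dvdnn ij dvdn_lcmr.
  have j0 : (0 < (r a).2)%N by apply: dvdn_gt0 jn.
  have i0 : (0 < (r a).1)%N by apply: dvdn_gt0 ij.
  rewrite (_ : lcmn (r a).2 (r a).2 = (r a).2); last first.
    by apply/eqP; rewrite eqn_dvd dvdn_lcm dvdnn dvdn_lcml.
  rewrite pnatr_eq0 -lt0n muln_gt0 totient_gt0 i0 divn_gt0 //.
  exact: dvdn_leq n0 jn.
move=> a b ab; rewrite mxE /Lentry -/(r a) -/(r b).
case: ifP => [/andP[di jl] _|]; last by rewrite eqxx.
have /andP[jn ij] := rP a; have /andP[cn dc] := rP b.
have j0 : (0 < (r a).2)%N by apply: dvdn_gt0 jn.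
have i0 : (0 < (r a).1)%N by apply: dvdn_gt0 ij.
have Hc := ltn_ord (r b).2; have Hj := ltn_ord (r a).2.
rewrite /key.
case: (eqVneq ((r b).1 : nat) (r a).1) => [E|ne].
  have ic : ((r a).1 %| (r b).2)%N by rewrite -E.
  have jc : ((r a).2 %| (r b).2)%N.
    by move: jl; rewrite (_ : lcmn _ _ = (r b).2) //; apply/eqP; rewrite eqn_dvd dvdn_lcm dvdnn ic dvdn_lcmr.
  have c0 : (0 < (r b).2)%N by apply: dvdn_gt0 cn.
  have := dvdn_leq c0 jc; rewrite leq_eqVlt => /orP[/eqP E2|lt].
    exfalso; move/negP: ab; apply; apply/eqP.
    apply: enum_val_inj; apply: val_inj; rewrite -/(r a) -/(r b).
    by case: (r a) (r b) E E2 => [x y] [z w] /= /val_inj -> /val_inj ->.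
  rewrite E ltn_add2l; move: lt Hc Hj; clear; lia.
have lt : ((r b).1 < (r a).1)%N by rewrite ltn_neqAle ne dvdn_leq.
have := leq_mul lt (leqnn n.+1); rewrite mulSn.
move: Hc Hj; move: ((r b).1 * n.+1)%N ((r a).1 * n.+1)%N => X Y.
clear; lia.
Qed.
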